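(* Let $(X,d)$ be a compact metric space and $T:X\to X$ a continuous map with topological entropy $\lambda\ge0$ (finite). Then for every $x\in X$ and $\epsilon>0$ there is a map $f$ from $\mathbb N$ to the orbit $\{T^nx:n\in\mathbb N\}$ with finite range such that the anqie entropy of $f$ is at most $\lambda$ and $\sup_n d(T^nx,f(n))<\epsilon$.
   Context: $\mathbb N=\{0,1,2,\ldots\}$. For a compact Hausdorff space $X$ and a map $f:\mathbb N\to X$, let $X_f$ be the closure in $X^{\mathbb N}$ (product topology) of $\{(f(n),f(n+1),f(n+2),\ldots):n\in\mathbb N\}$, and let $B_f$ be the shift $(\omega_0,\omega_1,\ldots)\mapsto(\omega_1,\omega_2,\ldots)$ restricted to $X_f$. The anqie entropy of $f$ is the topological entropy $h(B_f)$. *)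

(* Defs.v *)
From Stdlib Require Import Reals Lra List.
Open Scope R_scope.

Definition is_metric {X : Type} (d : X -> X -> R) : Prop :=
  (forall x y, 0 <= d x y) /\
  (forall x y, d x y = 0 <-> x = y) /\
  (forall x y, d x y = d y x) /\
  (forall x y z, d x z <= d x y + d y z).

Definition is_open {X : Type} (d : X -> X -> R) (U : X -> Prop) : Prop :=
  forall x, U x -> exists r, 0 < r /\ forall y, d x y < r -> U y.

Definition is_compact {X : Type} (d : X -> X -> R) : Prop :=
  forall (I : Type) (U : I -> X -> Prop),
    (forall i, is_open d (U i)) ->
    (forall x, exists i, U i x) ->
    exists l : list I, forall x, exists i, In i l /\ U i x.

Definition is_continuous {X : Type} (d : X -> X -> R) (T : X -> X) : Prop :=
  forall x eps, 0 < eps -> exists delta, 0 < delta /\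
    forall y, d x y < delta -> d (T x) (T y) < eps.

(* ---------- Bowen topological entropy ----------
   [gap x y eps] means "rho x y > eps" for a compatible metric rho.
   (n,eps)-separated: some j < n with rho (S^j x) (S^j y) > eps.
   h(S|K) = sup_{eps>0} limsup_n (1/n) log sep(n,eps), sep = max card of an
   (n,eps)-separated subset of K.  Since h may be +oo we express the two
   relations h <= lam and h >= lam by unfolding sup / limsup. *)

Definition nsep {Y : Type} (gap : Y -> Y -> R -> Prop) (S : Y -> Y)
  (n : nat) (eps : R) (x y : Y) : Prop :=
  exists j, (j < n)%nat /\ gap (Nat.iter j S x) (Nat.iter j S y) eps.

Definition sep_set {Y : Type} (gap : Y -> Y -> R -> Prop) (S : Y -> Y)
  (K : Y -> Prop) (n : nat) (eps : R) (E : list Y) : Prop :=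
  Forall K E /\ ForallOrdPairs (nsep gap S n eps) E.

Definition entropy_le {Y : Type} (gap : Y -> Y -> R -> Prop) (S : Y -> Y)
  (K : Y -> Prop) (lam : R) : Prop :=
  forall eps, 0 < eps -> forall delta, 0 < delta ->
    exists N, forall n, (N <= n)%nat -> forall E, sep_set gap S K n eps E ->
      INR (length E) <= exp (INR n * (lam + delta)).

Definition entropy_ge {Y : Type} (gap : Y -> Y -> R -> Prop) (S : Y -> Y)
  (K : Y -> Prop) (lam : R) : Prop :=
  forall mu, mu < lam -> exists eps, 0 < eps /\
    forall N, exists n, (N <= n)%nat /\ exists E, sep_set gap S K n eps E /\
      exp (INR n * mu) < INR (length E).

Definition metric_gap {X : Type} (d : X -> X -> R) (x y : X) (eps : R) : Prop :=
  eps < d x y.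

Definition top_entropy_eq {X : Type} (d : X -> X -> R) (T : X -> X) (lam : R) : Prop :=
  entropy_le (metric_gap d) T (fun _ => True) lam /\
  entropy_ge (metric_gap d) T (fun _ => True) lam.

(* compatible metric on X^N (product topology):
   rho w w' = sup_k 2^{-k} min(d (w k) (w' k), 1); [prod_gap w w' eps] is rho w w' > eps *)
Definition prod_gap {X : Type} (d : X -> X -> R) (w w' : nat -> X) (eps : R) : Prop :=
  exists k, eps < (/2) ^ k * Rmin (d (w k) (w' k)) 1.

Definition shift {X : Type} (w : nat -> X) : nat -> X := fun k => w (S k).

(* X_f : closure in X^N (product topology) of {(f n, f (n+1), ...) : n} ;
   basic neighbourhoods constrain finitely many coordinates. *)
Definition anqie_space {X : Type} (d : X -> X -> R) (f : nat -> X) (w : nat -> X) : Prop :=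
  forall m eps, 0 < eps -> exists n, forall k, (k < m)%nat -> d (f (n + k)%nat) (w k) < eps.

Definition anqie_entropy_le {X : Type} (d : X -> X -> R) (f : nat -> X) (lam : R) : Prop :=
  entropy_le (prod_gap d) shift (anqie_space d f) lam.

(* Main.v *)
Require Import Defs.
From Stdlib Require Import Reals Lra Lia List Arith Classical IndefiniteDescription.
Import ListNotations.
Open Scope R_scope.

Lemma nat_max_exists (Q : nat -> Prop) (B : nat) :
  (exists n, Q n) -> (forall n, Q n -> (n <= B)%nat) ->
  exists m, Q m /\ forall n, Q n -> (n <= m)%nat.
Proof.
  revert Q; induction B as [|B IH]; intros Q [n0 Hn0] Hb.
  - exists n0; split; auto. intros n Hn. pose proof (Hb _ Hn). lia.
  - destruct (classic (Q (S B))) as [HQ|HQ].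
    + exists (S B); split; auto.
    + apply IH; [exists n0; auto|]. intros n Hn. specialize (Hb _ Hn).
      destruct (Nat.eq_dec n (S B)); [subst; contradiction|lia].
Qed.

Lemma iter_shift {X : Type} (j : nat) (w : nat -> X) (k : nat) :
  Nat.iter j shift w k = w (j + k)%nat.
Proof.
  revert k; induction j; intros k; simpl; auto.
  unfold shift at 1. rewrite IHj. f_equal. lia.
Qed.

Lemma fop_nodup {A B : Type} (R : A -> A -> Prop) (g : A -> B) (l : list A) :
  (forall a b, R a b -> g a <> g b) -> ForallOrdPairs R l -> NoDup (map g l).
Proof.
  intros HR H; induction H; simpl; constructor; auto.
  intro Hin. apply in_map_iff in Hin as [b [Hb Hin]].
  rewrite Forall_forall in H. apply (HR a b (H b Hin)). auto.
Qed.

Fixpoint tuples (Sl : list nat) (n : nat) : list (list nat) :=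
  match n with
  | O => [nil]
  | S n' => flat_map (fun a => map (cons a) (tuples Sl n')) Sl
  end.

Lemma fm_length (Sl : list nat) (T : list (list nat)) :
  length (flat_map (fun a => map (cons a) T) Sl) = (length Sl * length T)%nat.
Proof. induction Sl; simpl; auto. rewrite length_app, length_map, IHSl. auto. Qed.

Lemma tuples_length (Sl : list nat) n : length (tuples Sl n) = (length Sl ^ n)%nat.
Proof. induction n; simpl; auto. rewrite fm_length, IHn. auto. Qed.

Lemma tuples_in (Sl : list nat) n (t : list nat) :
  length t = n -> (forall a, In a t -> In a Sl) -> In t (tuples Sl n).
Proof.
  revert t; induction n; intros t Hl Hin.
  - destruct t; simpl in *; [auto|discriminate].
  - destruct t as [|a t]; simpl in *; [discriminate|].
    apply in_flat_map. exists a; split; auto.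
    apply in_map. apply IHn; auto.
Qed.

Lemma exp_pow_INR (a : R) n : exp a ^ n = exp (INR n * a).
Proof.
  induction n; simpl; [rewrite Rmult_0_l, exp_0; auto|].
  rewrite IHn. rewrite <- exp_plus. f_equal. destruct n; simpl; lra.
Qed.

Lemma exp_le_mono a b : a <= b -> exp a <= exp b.
Proof. intros H; destruct H; [left; apply exp_increasing; auto|subst; lra]. Qed.

Lemma divmod_block (a b L R0 : nat) : (b < L)%nat -> (0 < R0)%nat ->
  ((a * L + b) / (R0 * L) = a / R0)%nat /\ ((a * L + b) mod (R0 * L) = (a mod R0) * L + b)%nat.
Proof.
  intros Hb HR.
  assert (Ha := Nat.div_mod a R0 ltac:(lia)).
  assert (Hm := Nat.mod_upper_bound a R0 ltac:(lia)).
  assert (Hlt : ((a mod R0) * L + b < R0 * L)%nat) by nia.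
  assert (Heq : (a * L + b = R0 * L * (a / R0) + ((a mod R0) * L + b))%nat).
  { rewrite Ha at 1. nia. }
  split.
  - symmetry. eapply Nat.div_unique; eauto.
  - symmetry. eapply Nat.mod_unique; eauto.
Qed.

Lemma fop_map {A B : Type} (R : B -> B -> Prop) (g : A -> B) (l : list A) :
  ForallOrdPairs (fun a b => R (g a) (g b)) l -> ForallOrdPairs R (map g l).
Proof.
  intros H; induction H; simpl; constructor; auto.
  rewrite Forall_forall in *. intros y Hy. apply in_map_iff in Hy as [z [<- Hz]]. auto.
Qed.

Lemma span_exists {X : Type} (d : X -> X -> R) (T : X -> X) (x : X) (lam r dl : R) :
  0 < r -> 0 < dl -> entropy_le (metric_gap d) T (fun _ => True) lam ->
  (forall y, d y y = 0) ->
  exists N, forall n, (N <= n)%nat -> exists Sl : list nat,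
    In 0%nat Sl /\ INR (length Sl) <= exp (INR n * (lam + dl)) /\
    forall m, exists s, In s Sl /\ forall b, (b < n)%nat ->
      d (Nat.iter b T (Nat.iter m T x)) (Nat.iter b T (Nat.iter s T x)) <= r.
Proof.
  intros Hr Hdl Hent Hdd.
  destruct (Hent r Hr dl Hdl) as [N HN]. exists N. intros n Hn.
  set (P := fun Sl : list nat => In 0%nat Sl /\
        ForallOrdPairs (fun a b => nsep (metric_gap d) T n r (Nat.iter a T x) (Nat.iter b T x)) Sl).
  assert (Hbnd : forall Sl, P Sl -> INR (length Sl) <= exp (INR n * (lam + dl))).
  { intros Sl [_ HP]. rewrite <- (length_map (fun a => Nat.iter a T x)).
    apply HN; auto. split.
    - rewrite Forall_forall; auto.
    - apply fop_map. auto. }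
  destruct (INR_archimed 1 (exp (INR n * (lam + dl)))) as [B HB]; [lra|].
  destruct (nat_max_exists (fun k => exists Sl, P Sl /\ length Sl = k) B) as [k [[Sl [HPS HlS]] Hmax]].
  - exists 1%nat, [0%nat]. split; auto. split; [simpl; auto|]. constructor; constructor.
  - intros k [Sl [HP Hl]]. subst. apply Hbnd in HP.
    assert (INR (length Sl) < INR B) by lra. apply INR_lt in H. lia.
  - exists Sl. split; [apply HPS|]. split; [apply Hbnd; auto|].
    intros m. apply NNPP. intros Hno.
    assert (HP' : P (m :: Sl)).
    { destruct HPS as [H0 HF]. split; [right; auto|]. constructor; auto.
      rewrite Forall_forall. intros s Hs.
      apply NNPP. intros Hns. apply Hno. exists s. split; auto.
      intros b Hb. apply Rnot_lt_le. intros Hlt. apply Hns. exists b. split; auto. }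
    assert (Hk := Hmax (S k) ltac:(exists (m :: Sl); split; auto; simpl; lia)). lia.
Qed.

Fixpoint code (L : nat -> nat) (sp : nat -> nat -> nat) (k m : nat) {struct k} : nat -> nat :=
  match k with
  | O => fun i => (m + i)%nat
  | S k' => fun i => code L sp k' (sp k' (m + (i / L k') * L k')%nat) (i mod L k')%nat
  end.

Fixpoint esum (r : nat -> R) (k : nat) : R :=
  match k with O => 0 | S k' => esum r k' + r k' end.

Lemma Ldiv (L : nat -> nat) (HL : forall k, (0 < L k)%nat)
  (Hd : forall k, exists R0, L (S k) = (R0 * L k)%nat /\ (0 < R0)%nat) :
  forall d j, exists R0, L (d + j)%nat = (R0 * L j)%nat /\ (0 < R0)%nat.
Proof.
  induction d; intros j.
  - exists 1%nat. simpl. lia.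
  - destruct (IHd j) as [R1 [H1 H1p]]. destruct (Hd (d + j)%nat) as [R2 [H2 H2p]].
    exists (R2 * R1)%nat. simpl. rewrite H2, H1. split; nia.
Qed.

Lemma Lmono (L : nat -> nat) (HL : forall k, (0 < L k)%nat)
  (Hd : forall k, exists R0, L (S k) = (R0 * L k)%nat /\ (0 < R0)%nat) :
  forall d j, (L j <= L (d + j))%nat.
Proof.
  intros d j. destruct (Ldiv L HL Hd d j) as [R0 [H Hp]]. rewrite H. nia.
Qed.

Lemma consist (L : nat -> nat) (sp : nat -> nat -> nat) (HL : forall k, (0 < L k)%nat)
  (Hd : forall k, exists R0, L (S k) = (R0 * L k)%nat /\ (0 < R0)%nat)
  (H0 : forall k, sp k 0%nat = 0%nat) :
  forall d k i, (i < L k)%nat -> code L sp (d + k) 0 i = code L sp k 0 i.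
Proof.
  induction d; intros k i Hi; [reflexivity|].
  simpl. rewrite <- (IHd k i Hi).
  assert (Hi' : (i < L (d + k))%nat) by (pose proof (Lmono L HL Hd d k); lia).
  rewrite (Nat.div_small _ _ Hi'), (Nat.mod_small _ _ Hi'). simpl. rewrite H0. reflexivity.
Qed.

Lemma sub_block (L : nat -> nat) (sp : nat -> nat -> nat) (HL : forall k, (0 < L k)%nat)
  (Hd : forall k, exists R0, L (S k) = (R0 * L k)%nat /\ (0 < R0)%nat) :
  forall d j m a, exists s, forall b, (b < L j)%nat ->
    code L sp (S d + j) m (a * L j + b) = code L sp j (sp j s) b.
Proof.
  induction d; intros j m a.
  - exists (m + a * L j)%nat. intros b Hb. simpl.
    destruct (divmod_block a b (L j) 1 Hb ltac:(lia)) as [E1 E2].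
    rewrite Nat.mul_1_l in E1, E2. rewrite E1, E2, Nat.div_1_r, Nat.mod_1_r. reflexivity.
  - destruct (Ldiv L HL Hd (S d) j) as [R0 [HR HRp]].
    set (m' := sp (S d + j)%nat (m + (a / R0) * (R0 * L j))%nat).
    destruct (IHd j m' (a mod R0)%nat) as [s Hs]. exists s. intros b Hb.
    rewrite <- (Hs b Hb). change (S (S d) + j)%nat with (S (S d + j)).
    cbn [code]. rewrite HR.
    destruct (divmod_block a b (L j) R0 Hb HRp) as [E1 E2].
    rewrite E1, E2. reflexivity.
Qed.

Lemma alph (L : nat -> nat) (sp : nat -> nat -> nat) (Sl : nat -> list nat)
  (HL : forall k, (0 < L k)%nat) (Hsp : forall k m, In (sp k m) (Sl k)) :
  forall k s i, (i < L k)%nat -> exists s0 b, In s0 (Sl 0%nat) /\ (b < L 0%nat)%nat /\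
     code L sp k (sp k s) i = (s0 + b)%nat.
Proof.
  induction k; intros s i Hi.
  - exists (sp 0%nat s), i. simpl. auto.
  - simpl. apply IHk. apply Nat.mod_upper_bound. specialize (HL k). lia.
Qed.

Lemma code_err {X : Type} (d : X -> X -> R) (T : X -> X) (x : X)
  (L : nat -> nat) (sp : nat -> nat -> nat) (r : nat -> R)
  (HL : forall k, (0 < L k)%nat)
  (Hdd : forall y, d y y = 0) (Htri : forall a b c, d a c <= d a b + d b c)
  (Hspan : forall k m b, (b < L k)%nat ->
      d (Nat.iter b T (Nat.iter m T x)) (Nat.iter b T (Nat.iter (sp k m) T x)) <= r k) :
  forall k m i, d (Nat.iter (m + i) T x) (Nat.iter (code L sp k m i) T x) <= esum r k.
Proof.
  induction k; intros m i.
  - simpl. rewrite Hdd. lra.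
  - simpl. set (q := (i / L k)%nat). set (b := (i mod L k)%nat).
    assert (Hb : (b < L k)%nat) by (apply Nat.mod_upper_bound; specialize (HL k); lia).
    assert (Hi : (m + i = b + (m + q * L k))%nat).
    { assert (H := Nat.div_mod i (L k) ltac:(specialize (HL k); lia)). fold q b in H. lia. }
    rewrite Rplus_comm. eapply Rle_trans; [apply (Htri _ (Nat.iter (b + sp k (m + q * L k)%nat) T x))|].
    apply Rplus_le_compat.
    + rewrite Hi, (Nat.iter_add b (m + q * L k)), (Nat.iter_add b (sp k _)). apply Hspan; auto.
    + rewrite (Nat.add_comm b). apply IHk.
Qed.

Lemma pow_le_1' (a : R) k : 0 <= a <= 1 -> 0 <= a ^ k <= 1.
Proof.
  intros H; induction k; simpl; [lra|]. split; [apply Rmult_le_pos; lra|].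
  rewrite <- (Rmult_1_l 1). apply Rmult_le_compat; lra.
Qed.

Lemma fop_mono {A : Type} (P : A -> Prop) (R R' : A -> A -> Prop) (l : list A) :
  Forall P l -> ForallOrdPairs R l -> (forall a b, P a -> P b -> R a b -> R' a b) ->
  ForallOrdPairs R' l.
Proof.
  intros HP HR H. induction HR; constructor.
  - inversion HP; subst. rewrite Forall_forall in *. intros y Hy. apply H; auto.
  - apply IHHR. inversion HP; auto.
Qed.

Lemma wind_eq {X : Type} (f : nat -> X) p p' M i :
  map (fun i => f (p + i)%nat) (seq 0 M) = map (fun i => f (p' + i)%nat) (seq 0 M) ->
  (i < M)%nat -> f (p + i)%nat = f (p' + i)%nat.
Proof.
  intros H Hi.
  assert (E1 : nth i (map (fun i => f (p + i)%nat) (seq 0 M)) (f (p + 0)%nat) = f (p + i)%nat).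
  { rewrite (map_nth (fun i => f (p + i)%nat)). rewrite seq_nth; auto. }
  assert (E2 : nth i (map (fun i => f (p' + i)%nat) (seq 0 M)) (f (p' + 0)%nat) = f (p' + i)%nat).
  { rewrite (map_nth (fun i => f (p' + i)%nat)). rewrite seq_nth; auto. }
  rewrite <- E1, <- E2, H. apply nth_indep. rewrite length_map, length_seq. auto.
Qed.

Lemma anqie_bound {X : Type} (d : X -> X -> R) (f : nat -> X) (lam : R)
  (Hmet : is_metric d) (Hlam : 0 <= lam)
  (Hblk : forall dl, 0 < dl -> exists (Lj : nat) (Sj : list nat) (word : nat -> nat -> X),
      (0 < Lj)%nat /\ INR (length Sj) <= exp (INR Lj * (lam + dl)) /\
      forall q, (1 <= q)%nat -> exists s, In s Sj /\
        forall b, (b < Lj)%nat -> f (q * Lj + b)%nat = word s b) :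
  anqie_entropy_le d f lam.
Proof.
  destruct Hmet as [Hpos [Hzero [Hsym Htri]]].
  intros eps Heps dl Hdl.
  destruct (Hblk (dl / 2) ltac:(lra)) as [Lj [Sj [word [HLj [HSj Hq]]]]].
  destruct (pow_lt_1_zero (/ 2) ltac:(rewrite Rabs_pos_eq; lra) eps Heps) as [K HK].
  set (a := lam + dl / 2).
  destruct (INR_archimed (dl / 2) (ln (2 * INR Lj) + (INR K + 2 * INR Lj) * a)) as [N HN]; [lra|].
  exists N. intros n Hn E [HEK HEsep].
  set (M := (n + K)%nat).
  set (wind := fun p => map (fun i => f (p + i)%nat) (seq 0 M)).
  set (bb := (M / Lj + 2)%nat).
  set (C := map wind (seq 0 Lj) ++
            map (fun ot : nat * list nat => map (fun i => word (nth ((fst ot + i) / Lj) (snd ot) 0%nat) ((fst ot + i) mod Lj)) (seq 0 M))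
                (list_prod (seq 0 Lj) (tuples Sj bb))).
  destruct (functional_choice (fun q s => (1 <= q)%nat -> In s Sj /\
        forall b, (b < Lj)%nat -> f (q * Lj + b)%nat = word s b)) as [sf Hsf].
  { intros q. destruct q as [|q]. { exists 0%nat. lia. }
    destruct (Hq (S q) ltac:(lia)) as [s Hs]. exists s. auto. }
  assert (HwinC : forall p, In (wind p) C).
  { intros p. apply in_or_app. destruct (Nat.lt_ge_cases p Lj) as [Hp|Hp].
    - left. apply in_map. apply in_seq. lia.
    - right. set (q := (p / Lj)%nat). set (o := (p mod Lj)%nat).
      assert (Hpd := Nat.div_mod p Lj ltac:(lia)). fold q o in Hpd.
      assert (Ho : (o < Lj)%nat) by (apply Nat.mod_upper_bound; lia).
      assert (Hq1 : (1 <= q)%nat) by nia.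
      set (t := map (fun r => sf (q + r)%nat) (seq 0 bb)).
      apply in_map_iff. exists (o, t). split.
      + unfold wind. apply map_ext_in. intros i Hi. apply in_seq in Hi. simpl.
        set (u := ((o + i) / Lj)%nat). set (v := ((o + i) mod Lj)%nat).
        assert (Hod := Nat.div_mod (o + i) Lj ltac:(lia)). fold u v in Hod.
        assert (Hv : (v < Lj)%nat) by (apply Nat.mod_upper_bound; lia).
        assert (Hu : (u < bb)%nat).
        { unfold u, bb. apply Nat.Div0.div_lt_upper_bound.
          assert (Hm := Nat.Div0.mul_div_le M Lj). assert (Hmm := Nat.mod_upper_bound M Lj ltac:(lia)).
          assert (HM := Nat.div_mod M Lj ltac:(lia)). nia. }
        assert (Hnth : nth u t 0%nat = sf (q + u)%nat).
        { unfold t. rewrite (nth_indep _ 0%nat (sf (q + 0)%nat)) by (rewrite length_map, length_seq; auto).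
          rewrite (map_nth (fun r => sf (q + r)%nat)). rewrite seq_nth; auto. }
        rewrite Hnth.
        destruct (Hsf (q + u)%nat ltac:(lia)) as [_ Hb]. rewrite <- Hb by auto.
        f_equal. nia.
      + apply in_prod. { apply in_seq. lia. }
        apply tuples_in. { unfold t. rewrite length_map, length_seq. auto. }
        intros s Hs. unfold t in Hs. apply in_map_iff in Hs as [r [<- Hr]].
        apply (Hsf (q + r)%nat ltac:(lia)). }
  destruct (functional_choice (fun (w : nat -> X) p => anqie_space d f w ->
       forall i, (i < M)%nat -> d (f (p + i)%nat) (w i) < eps / 2)) as [pf Hpf].
  { intros w. destruct (classic (anqie_space d f w)) as [Hw|Hw].
    - destruct (Hw M (eps / 2) ltac:(lra)) as [p Hp]. exists p. auto.
    - exists 0%nat. intros; contradiction. }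
  assert (Hnd : NoDup (map (fun w => wind (pf w)) E)).
  { apply (fop_nodup (fun a b => wind (pf a) <> wind (pf b))); auto.
    apply (fop_mono (anqie_space d f) _ _ E HEK HEsep).
    intros w w' Hw Hw' [j [Hj [k Hk]]] Heq.
    rewrite !iter_shift in Hk.
    assert (Hpk := pow_le_1' (/ 2) k ltac:(lra)).
    assert (Hmin0 : 0 <= Rmin (d (w (j + k)%nat) (w' (j + k)%nat)) 1)
      by (apply Rmin_glb; [apply Hpos|lra]).
    assert (Hk' : (k < K)%nat).
    { destruct (Nat.lt_ge_cases k K) as [|HkK]; auto.
      specialize (HK k HkK). rewrite Rabs_pos_eq in HK by lra.
      assert ((/ 2) ^ k * Rmin (d (w (j + k)%nat) (w' (j + k)%nat)) 1 <= (/2) ^ k).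
      { rewrite <- (Rmult_1_r ((/2)^k)) at 2. apply Rmult_le_compat_l; [lra|apply Rmin_r]. }
      lra. }
    set (i := (j + k)%nat) in *.
    assert (Hi : (i < M)%nat) by (unfold i, M; lia).
    assert (Hfe := wind_eq f (pf w) (pf w') M i Heq Hi).
    assert (H1 := Hpf w Hw i Hi). assert (H2 := Hpf w' Hw' i Hi).
    assert (Hd : d (w i) (w' i) < eps).
    { eapply Rle_lt_trans; [apply (Htri _ (f (pf w + i)%nat))|].
      rewrite Hsym. rewrite Hfe at 2. lra. }
    assert (H3 : (/ 2) ^ k * Rmin (d (w i) (w' i)) 1 <= 1 * d (w i) (w' i)).
    { apply Rmult_le_compat; try lra. apply Rmin_l. }
    lra. }
  assert (Hlen : (length E <= length C)%nat).
  { rewrite <- (length_map (fun w => wind (pf w)) E). apply NoDup_incl_length; auto.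
    intros c Hc. apply in_map_iff in Hc as [w [<- _]]. apply HwinC. }
  assert (HlenC : length C = (Lj + Lj * length Sj ^ bb)%nat).
  { unfold C. rewrite length_app, !length_map, length_prod, tuples_length, !length_seq. auto. }
  apply le_INR in Hlen. rewrite HlenC, plus_INR, mult_INR, pow_INR in Hlen.
  assert (Hbb : (bb * Lj <= n + K + 2 * Lj)%nat).
  { unfold bb, M. assert (Hm := Nat.Div0.mul_div_le (n + K) Lj). nia. }
  apply le_INR in Hbb. rewrite !mult_INR, !plus_INR in Hbb. rewrite (mult_INR 2 Lj) in Hbb. replace (INR 2) with 2 in Hbb by (simpl; lra).
  assert (HLpos : 0 < INR Lj) by (apply lt_0_INR; lia).
  assert (Ha : 0 <= a) by (unfold a; lra).
  assert (Hpw : INR (length Sj) ^ bb <= exp (INR bb * (INR Lj * a))).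
  { rewrite <- exp_pow_INR. apply pow_incr. split; [apply pos_INR|]. apply HSj. }
  assert (Hex1 : 1 <= exp (INR bb * (INR Lj * a))).
  { rewrite <- exp_0. apply exp_le_mono. apply Rmult_le_pos; [apply pos_INR|]. apply Rmult_le_pos; lra. }
  assert (Hstep : INR (length E) <= exp (ln (2 * INR Lj) + (INR n + INR K + 2 * INR Lj) * a)).
  { rewrite exp_plus, exp_ln by lra.
    assert (exp (INR bb * (INR Lj * a)) <= exp ((INR n + INR K + 2 * INR Lj) * a)).
    { apply exp_le_mono. rewrite <- Rmult_assoc. apply Rmult_le_compat_r; lra. }
    assert (INR Lj * INR (length Sj) ^ bb <= INR Lj * exp (INR bb * (INR Lj * a))).
    { apply Rmult_le_compat_l; lra. }
    nra. }
  eapply Rle_trans; [apply Hstep|]. apply exp_le_mono.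
  apply le_INR in Hn. unfold a in *. nra.
Qed.

Fixpoint Lf (Nf : nat -> nat) (k : nat) : nat :=
  match k with
  | O => S (Nf O)
  | S k' => (Lf Nf k' * S (S (Nf (S k'))))%nat
  end.

Lemma Lf_props (Nf : nat -> nat) k :
  (0 < Lf Nf k)%nat /\ (Nf k <= Lf Nf k)%nat /\ (k < Lf Nf k)%nat.
Proof.
  induction k as [|k [H1 [H2 H3]]]; simpl; [lia|].
  repeat split; nia.
Qed.

Lemma esum_val (c : R) k : esum (fun k => c * (/ 2) ^ (S k)) k = c * (1 - (/ 2) ^ k).
Proof. induction k; cbn [esum]; [simpl; lra|]. rewrite IHk. simpl. field. Qed.

Theorem proposition1p9 (X : Type) (d : X -> X -> R) (T : X -> X) (lam : R)
  (Hmet : is_metric d) (Hcpt : is_compact d) (Hcont : is_continuous d T)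
  (Hlam : 0 <= lam) (Hent : top_entropy_eq d T lam) :
  forall (x : X) (eps : R), 0 < eps ->
    exists f : nat -> X,
      (forall n, exists m, f n = Nat.iter m T x) /\
      (exists l : list X, forall n, In (f n) l) /\
      anqie_entropy_le d f lam /\
      (exists c, c < eps /\ forall n, d (Nat.iter n T x) (f n) <= c).
Proof.
  intros x eps Heps.
  pose proof Hmet as [Hpos [Hzero [Hsym Htri]]].
  assert (Hdd : forall y, d y y = 0) by (intros; apply Hzero; auto).
  set (c := eps / 2).
  set (r := fun k : nat => c * (/ 2) ^ (S k)).
  set (dl := fun k : nat => / (INR k + 1)).
  assert (Hr : forall k, 0 < r k).
  { intros k. unfold r, c. apply Rmult_lt_0_compat; [lra|]. apply pow_lt. lra. }
  assert (Hdl : forall k, 0 < dl k).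
  { intros k. unfold dl. apply Rinv_0_lt_compat. pose proof (pos_INR k). lra. }
  destruct (functional_choice (fun k N => forall n, (N <= n)%nat -> exists Sl : list nat,
    In 0%nat Sl /\ INR (length Sl) <= exp (INR n * (lam + dl k)) /\
    forall m, exists s, In s Sl /\ forall b, (b < n)%nat ->
      d (Nat.iter b T (Nat.iter m T x)) (Nat.iter b T (Nat.iter s T x)) <= r k)) as [Nf HNf].
  { intros k. apply span_exists; auto. apply Hent. }
  set (L := Lf Nf).
  assert (HL : forall k, (0 < L k)%nat) by (intros; apply Lf_props).
  assert (HLd : forall k, exists R0, L (S k) = (R0 * L k)%nat /\ (0 < R0)%nat).
  { intros k. exists (S (S (Nf (S k)))). unfold L. simpl. split; lia. }
  destruct (functional_choice (fun k (p : list nat * (nat -> nat)) =>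
     INR (length (fst p)) <= exp (INR (L k) * (lam + dl k)) /\
     (forall m, In (snd p m) (fst p)) /\ snd p 0%nat = 0%nat /\
     forall m b, (b < L k)%nat ->
       d (Nat.iter b T (Nat.iter m T x)) (Nat.iter b T (Nat.iter (snd p m) T x)) <= r k)) as [P HP].
  { intros k. destruct (HNf k (L k) ltac:(apply Lf_props)) as [Sl [H0 [Hb Hs]]].
    destruct (functional_choice _ Hs) as [sp Hsp].
    exists (Sl, fun m => if Nat.eqb m 0 then 0%nat else sp m). simpl.
    split; auto. split; [|split; auto].
    - intros m. destruct (Nat.eqb m 0); auto. apply Hsp.
    - intros m b Hb'. destruct (Nat.eqb_spec m 0).
      + subst. rewrite Hdd. left. apply Hr.
      + apply Hsp; auto. }
  set (Sl := fun k => fst (P k)).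
  set (sp := fun k => snd (P k)).
  assert (Hsp_in : forall k m, In (sp k m) (Sl k)) by (intros; apply HP).
  assert (Hsp0 : forall k, sp k 0%nat = 0%nat) by (intros; apply HP).
  assert (Hspan : forall k m b, (b < L k)%nat ->
      d (Nat.iter b T (Nat.iter m T x)) (Nat.iter b T (Nat.iter (sp k m) T x)) <= r k)
    by (intros; apply HP; auto).
  assert (HSl : forall k, INR (length (Sl k)) <= exp (INR (L k) * (lam + dl k))) by (intros; apply HP).
  exists (fun n => Nat.iter (code L sp (S n) 0 n) T x).
  split; [|split; [|split]].
  - intros n. eexists; reflexivity.
  - exists (map (fun pr : nat * nat => Nat.iter (fst pr + snd pr) T x) (list_prod (Sl 0%nat) (seq 0 (L 0%nat)))).
    intros n. cbn [code].
    destruct (alph L sp Sl HL Hsp_in n (0 + n / L n * L n)%nat (n mod L n)%nat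
       ltac:(apply Nat.mod_upper_bound; specialize (HL n); lia)) as [s0 [b [Hs0 [Hb Heq]]]].
    rewrite Heq. apply in_map_iff. exists (s0, b). split; auto.
    apply in_prod; auto. apply in_seq. lia.
  - apply anqie_bound; auto.
    intros e He.
    destruct (INR_archimed e 1 He) as [j Hj].
    exists (L j), (Sl j), (fun s b => Nat.iter (code L sp j s b) T x).
    split; [apply HL|]. split.
    + eapply Rle_trans; [apply HSl|]. apply exp_le_mono. apply Rmult_le_compat_l; [apply pos_INR|].
      assert (dl j <= e).
      { unfold dl. pose proof (pos_INR j).
        rewrite <- (Rmult_1_l (/ (INR j + 1))).
        apply (Rmult_le_reg_l (INR j + 1)); [lra|].
        field_simplify; lra. }
      lra.
    + intros q Hq.
      set (D := ((q + 1) * L j)%nat).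
      destruct (sub_block L sp HL HLd D j 0%nat q) as [s Hs].
      exists (sp j s). split; [apply Hsp_in|].
      intros b Hb.
      set (n := (q * L j + b)%nat).
      assert (Hn : (n < D)%nat) by (unfold n, D; nia).
      rewrite <- (Hs b Hb). fold n.
      pose proof (Lf_props Nf (S n)) as [_ [_ HnL]].
      replace (S D + j)%nat with ((S D + j - S n) + S n)%nat by lia.
      rewrite (consist L sp HL HLd Hsp0 (S D + j - S n) (S n) n ltac:(unfold L; lia)).
      reflexivity.
  - exists c. split; [unfold c; lra|].
    intros n.
    pose proof (code_err d T x L sp r HL Hdd Htri Hspan (S n) 0 n) as He.
    simpl Nat.add in He. unfold r in He. rewrite esum_val in He.
    assert (0 <= (/ 2) ^ S n) by (apply pow_le; lra).
    assert (0 < c) by (unfold c; lra).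
    eapply Rle_trans; [apply He|]. nra.
Qed.
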